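(* Let $\mathcal V$ be a complex topological vector space and $\mathcal D\subseteq\mathcal V_{\rm nc}$ a noncommutative set such that (P2) $UaU^*\in\mathcal D_n$ for all $a\in\mathcal D_n$ and unitary $U\in\mathbb C^{n\times n}$, and (P3) if $\begin{bmatrix}a&0\\0&c\end{bmatrix}\in\mathcal D_{n+m}$ with $a\in\mathcal V^{n\times n},c\in\mathcal V^{m\times m}$, then $a\in\mathcal D_n,c\in\mathcal D_m$. The following statements are equivalent: (i) for all $n,m\in\mathbb N$, $a\in\mathcal D_n$, $c\in\mathcal D_m$, $b\in\mathcal V^{n\times m}$: $\delta_{\mathcal D}(a,c)(b)=0\implies b=0$; (ii) for all $n\in\mathbb N$, $a\in\mathcal D_n$, $b\in\mathcal V^{n\times n}$: $\delta_{\mathcal D}(a,a)(b)=0\implies b=0$; (iii) for all $n\in\mathbb N$, $a,c\in\mathcal D_n$: $\tilde\delta_{\mathcal D}(a,c)=0\implies a=c$; (iv) for every $k\in\mathbb N$ there exists no non-constant noncommutative function $f\colon\mathbb C_{\rm nc}\to(\mathcal D_k)_{\rm nc}$.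
   Context: A noncommutative set is a family $\mathcal D=(\mathcal D_n)$, $\mathcal D_n\subseteq\mathcal V^{n\times n}$, closed under direct sums. For $a\in\mathcal D_n,c\in\mathcal D_m,b\in\mathcal V^{n\times m}$, $\delta_{\mathcal D}(a,c)(b)=\big[\sup\{t\in[0,+\infty]\colon\begin{bmatrix}a&sb\\0&c\end{bmatrix}\in\mathcal D_{n+m}\ \forall s\in[0,t]\}\big]^{-1}\in[0,+\infty]$ ($1/0=+\infty$, $1/\infty=0$), and $\tilde\delta_{\mathcal D}(a,c)=\delta_{\mathcal D}(a,c)(a-c)$ for $a,c\in\mathcal D_n$. $\mathbb C_{\rm nc}=\coprod_p\mathbb C^{p\times p}$, and $(\mathcal D_k)_{\rm nc}$ denotes the nc set over the vector space $\mathcal V^{k\times k}$ whose $p$-th level is $\mathcal D_{kp}$ (identifying $(\mathcal V^{k\times k})^{p\times p}$ with $\mathcal V^{kp\times kp}$). A noncommutative function $f$ between nc sets maps level $p$ to level $p$, respects direct sums and satisfies $f(T^{-1}ZT)=T^{-1}f(Z)T$ for invertible scalar $T$ (acting blockwise). *)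

(* Defs.v *)
From HB Require Import structures.
From mathcomp Require Import all_boot all_order all_algebra.
From mathcomp Require Import complex.
From mathcomp Require Import classical_sets reals ereal topology tvs.
Set Implicit Arguments. Unset Strict Implicit. Unset Printing Implicit Defensive.
Import Order.TTheory GRing.Theory Num.Theory.
Local Open Scope ring_scope.
Local Open Scope classical_set_scope.
Local Open Scope complex_scope.

Definition lmulmx (K : pzRingType) (X : lmodType K) (m n r : nat)
  (A : 'M[K]_(m, n)) (W : 'M[X]_(n, r)) : 'M[X]_(m, r) :=
  \matrix_(i, j) \sum_(l < n) A i l *: W l j.

Definition rmulmx (K : pzRingType) (X : lmodType K) (m n r : nat)
  (W : 'M[X]_(m, n)) (A : 'M[K]_(n, r)) : 'M[X]_(m, r) :=
  \matrix_(i, j) \sum_(l < n) A l j *: W i l.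

Definition scalemx (K : pzRingType) (X : lmodType K) (m n : nat)
  (x : K) (W : 'M[X]_(m, n)) : 'M[X]_(m, n) := \matrix_(i, j) (x *: W i j).

Definition adjmx (R : rcfType) (n : nat) (U : 'M[R[i]]_n) : 'M[R[i]]_n :=
  (map_mx (fun x => x^*) U)^T.

Definition unitary (R : rcfType) (n : nat) (U : 'M[R[i]]_n) : Prop :=
  U *m adjmx U = 1%:M.

Definition nc_set (K : pzRingType) (V : lmodType K) (D : forall n : nat, set 'M[V]_n) : Prop :=
  forall (n m : nat) (a : 'M[V]_n) (c : 'M[V]_m), (0 < n)%N -> (0 < m)%N ->
    D n a -> D m c -> D (n + m)%N (block_mx a 0 0 c).

Definition P2 (R : rcfType) (V : lmodType R[i]) (D : forall n : nat, set 'M[V]_n) : Prop :=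
  forall (n : nat) (a : 'M[V]_n) (U : 'M[R[i]]_n), (0 < n)%N ->
    D n a -> unitary U -> D n (rmulmx (lmulmx U a) (adjmx U)).

Definition P3 (K : pzRingType) (V : lmodType K) (D : forall n : nat, set 'M[V]_n) : Prop :=
  forall (n m : nat) (a : 'M[V]_n) (c : 'M[V]_m), (0 < n)%N -> (0 < m)%N ->
    D (n + m)%N (block_mx a 0 0 c) -> D n a /\ D m c.

Definition einv (R : realType) (x : \bar R) : \bar R :=
  if x == 0%E then +oo%E else if x == +oo%E then 0%E else ((fine x)^-1)%:E.

(* delta_D(a,c)(b) = [ sup { t in [0,+oo] : [a sb; 0 c] in D for all s in [0,t] } ]^-1.
   The supremum is taken in [0,+oo] (hence the max with 0, which only matters
   for an empty set). *)
Definition delta (R : realType) (V : lmodType R[i]) (D : forall n : nat, set 'M[V]_n)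
  (n m : nat) (a : 'M[V]_n) (c : 'M[V]_m) (b : 'M[V]_(n, m)) : \bar R :=
  einv (Order.max 0%E (ereal_sup
    [set t : \bar R | (0 <= t)%E /\
       forall s : R, 0 <= s -> (s%:E <= t)%E ->
         D (n + m)%N (block_mx a (scalemx (s%:C : R[i]) b) 0 c)])).

Definition tdelta (R : realType) (V : lmodType R[i]) (D : forall n : nat, set 'M[V]_n)
  (n : nat) (a c : 'M[V]_n) : \bar R := delta D a c (a - c).

(* Identification of (V^{k x k})^{p x p} with V^{pk x pk}: the entry (r, s)
   of the flattened matrix is entry (r2, s2) of block (r1, s1), where
   r = r1 * k + r2 (lexicographic enumeration of 'I_p * 'I_k). *)
Definition flat_idx (p k : nat) (r : 'I_(p * k)) : 'I_p * 'I_k :=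
  enum_val (cast_ord (esym (mxvec_cast p k)) r).

(* The matrix T (x) I_k acting blockwise on V^{pk x pk}, under the above
   identification. *)
Definition kronI (K : pzRingType) (k p : nat) (T : 'M[K]_p) : 'M[K]_(p * k) :=
  \matrix_(r, s) (T (flat_idx r).1 (flat_idx s).1 *+ ((flat_idx r).2 == (flat_idx s).2)).

(* f : C_nc -> (D_k)_nc is a noncommutative function (levels p >= 1); the
   p-th level of (D_k)_nc is D_{pk} (elements of V^{pk x pk}, viewed as
   p x p block matrices with k x k blocks). *)
Definition nc_fun_into (R : rcfType) (V : lmodType R[i]) (D : forall n : nat, set 'M[V]_n)
  (k : nat) (f : forall p : nat, 'M[R[i]]_p -> 'M[V]_(p * k)) : Prop :=
  [/\ (forall (p : nat) (Z : 'M[R[i]]_p), (0 < p)%N -> D (p * k)%N (f p Z)),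
      (forall (p q : nat) (X : 'M[R[i]]_p) (Y : 'M[R[i]]_q), (0 < p)%N -> (0 < q)%N ->
         f (p + q)%N (block_mx X 0 0 Y)
         = castmx (esym (mulnDl p q k), esym (mulnDl p q k))
             (block_mx (f p X) 0 0 (f q Y))) &
      (forall (p : nat) (T Z : 'M[R[i]]_p), (0 < p)%N -> T \in unitmx ->
         f p (invmx T *m Z *m T)
         = rmulmx (lmulmx (kronI k (invmx T)) (f p Z)) (kronI k T))].

Definition nc_constant (R : rcfType) (X : nat -> Type)
  (f : forall p : nat, 'M[R[i]]_p -> X p) : Prop :=
  forall (p : nat) (Z W : 'M[R[i]]_p), (0 < p)%N -> f p Z = f p W.

(* Main.v *)
Require Import Defs.
From HB Require Import structures.
From mathcomp Require Import all_boot all_order all_algebra.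
From mathcomp Require Import complex.
From mathcomp Require Import classical_sets reals ereal topology tvs.
From mathcomp Require Import fingroup perm spectral boolp zify.
Set Implicit Arguments. Unset Strict Implicit. Unset Printing Implicit Defensive.
Import Order.TTheory GRing.Theory Num.Theory.
Local Open Scope ring_scope.
Local Open Scope complex_scope.

Lemma eq_inlE (A B : eqType) (u v : A) : (@inl A B u == inl v) = (u == v).
Proof. by apply/eqP/eqP => [[]|->]. Qed.
Lemma eq_inrE (A B : eqType) (u v : B) : (@inr A B u == inr v) = (u == v).
Proof. by apply/eqP/eqP => [[]|->]. Qed.
Lemma eq_inlrE (A B : eqType) (u : A) (v : B) : (inl u == inr v) = false.
Proof. by apply/eqP. Qed.
Lemma eq_inrlE (A B : eqType) (u : B) (v : A) : (inr u == inl v) = false.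
Proof. by apply/eqP. Qed.

Lemma enum_prod_ord p k : enum {: 'I_p * 'I_k} = [seq (i, u) | i <- enum 'I_p, u <- enum 'I_k].
Proof. by rewrite enumT unlock. Qed.

Lemma index_iota0 k u : (u < k)%N -> index u (iota 0 k) = u.
Proof.
move=> hu; have := nth_iota 0 0 hu; rewrite add0n => {1}<-.
by rewrite index_uniq ?size_iota ?iota_uniq.
Qed.

Lemma index_allpairs_iota k s0 p i u : (s0 <= i < s0 + p)%N -> (u < k)%N ->
  index (i, u) [seq (a, b) | a <- iota s0 p, b <- iota 0 k] = ((i - s0) * k + u)%N.
Proof.
elim: p s0 => [|p IH] s0; first by move=> /andP[h1 h2]; exfalso; lia.
move=> /andP[h1 h2] hu /=; rewrite index_cat.
case: (eqVneq i s0) => [->|ne].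
  have -> : (s0, u) \in [seq (s0, b) | b <- iota 0 k] by apply/mapP; exists u; rewrite ?mem_iota.
  rewrite index_map; last by move=> x y [].
  by rewrite index_iota0 // subnn mul0n.
have -> : (i, u) \in [seq (s0, b) | b <- iota 0 k] = false.
  by apply/negbTE/mapP => -[x _ [e _]]; move: ne; rewrite e eqxx.
have lt : (s0 < i)%N by rewrite ltn_neqAle eq_sym ne h1.
rewrite size_map size_iota IH; last 2 first.
- by rewrite lt /=; rewrite addSnnS.
- done.
have -> : (i - s0 = (i - s0.+1).+1)%N by lia.
by rewrite mulSn addnA.
Qed.

Lemma val_enum_rank_pair p k (i : 'I_p) (u : 'I_k) :
  val (enum_rank (i, u)) = (i * k + u)%N.
Proof.
have e : val (enum_rank (i, u)) = index (i, u) (enum {: 'I_p * 'I_k}).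
  rewrite -{2}[(i, u)](enum_rankK (i, u)) (enum_val_nth (i, u)) index_uniq //.
    by rewrite -cardE.
  exact: enum_uniq.
rewrite e enum_prod_ord.
rewrite -(index_map (f := fun z : 'I_p * 'I_k => (val z.1, val z.2))); last first.
  by move=> [x1 x2] [y1 y2] /= [/val_inj -> /val_inj ->].
rewrite map_allpairs /=.
have -> : [seq (val x, val y) | x <- enum 'I_p, y <- enum 'I_k] =
          [seq (a, b) | a <- iota 0 p, b <- iota 0 k].
  by rewrite -!val_enum_ord allpairs_mapl allpairs_mapr.
by rewrite index_allpairs_iota ?subn0 // add0n ltn_ord.
Qed.


Definition idx p k (x : 'I_p * 'I_k) : 'I_(p * k) :=
  cast_ord (mxvec_cast p k) (enum_rank x).
Arguments idx : simpl never.

Lemma flat_idxK p k (x : 'I_p * 'I_k) : flat_idx (idx x) = x.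
Proof. by rewrite /flat_idx /idx cast_ordK enum_rankK. Qed.

Lemma idxK p k (r : 'I_(p * k)) : idx (flat_idx r) = r.
Proof. by rewrite /flat_idx /idx enum_valK cast_ordKV. Qed.

Lemma idx_bij p k : bijective (@idx p k).
Proof. by exists (@flat_idx p k); [exact: flat_idxK | exact: idxK]. Qed.

Lemma val_idx p k (i : 'I_p) (u : 'I_k) : val (idx (i, u)) = (i * k + u)%N.
Proof. by rewrite /idx /= val_enum_rank_pair. Qed.

Lemma val_cast m n (e : m = n) (x : 'I_m) : val (cast_ord e x) = val x.
Proof. by []. Qed.
Lemma val_lshift p q (i : 'I_p) : val (lshift q i) = val i.
Proof. by []. Qed.
Lemma val_rshift p q (j : 'I_q) : val (rshift p j) = (p + j)%N.
Proof. by []. Qed.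

Lemma idx_lshift p q k (i : 'I_p) (u : 'I_k) :
  cast_ord (mulnDl p q k) (idx (lshift q i, u)) = lshift (q * k) (idx (i, u)).
Proof. by apply: val_inj; rewrite val_cast !val_lshift !val_idx val_lshift. Qed.

Lemma idx_rshift p q k (j : 'I_q) (u : 'I_k) :
  cast_ord (mulnDl p q k) (idx (rshift p j, u)) = rshift (p * k) (idx (j, u)).
Proof. by apply: val_inj; rewrite val_cast !val_rshift !val_idx val_rshift mulnDl addnA. Qed.

Section Frame.
Variable R : realType.
Variable V : lmodType R[i].
Unset Implicit Arguments.
Variable D : forall n : nat, set 'M[V]_n.
Set Implicit Arguments.
Hypothesis ncD : nc_set D.
Hypothesis P2D : P2 D.
Hypothesis P3D : P3 D.

Lemma sum_delta (I : finType) (x : I) (F : I -> V) :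
  \sum_(l : I) ((x == l)%:R : R[i]) *: F l = F x.
Proof.
rewrite (bigD1 x) //= eqxx scale1r big1 ?addr0 // => l.
by rewrite eq_sym => /negbTE ->; rewrite scale0r.
Qed.

Lemma sum_deltaC (I : finType) (x : I) (F : I -> R[i]) :
  \sum_(l : I) ((x == l)%:R : R[i]) * F l = F x.
Proof.
rewrite (bigD1 x) //= eqxx mul1r big1 ?addr0 // => l.
by rewrite eq_sym => /negbTE ->; rewrite mul0r.
Qed.

Lemma D_perm N (s : {perm 'I_N}) W : D N W -> D N (\matrix_(i, j) W (s i) (s j)).
Proof.
case: N s W => [|N] s W DW.
  suff -> : (\matrix_(i, j) W (s i) (s j)) = W by [].
  by apply/matrixP => -[].
pose P : 'M[R[i]]_N.+1 := \matrix_(i, j) ((s i == j)%:R).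
have uP : unitary P.
  rewrite /unitary; apply/matrixP => i j; rewrite !mxE.
  transitivity (\sum_l ((s i == l)%:R * (s j == l)%:R : R[i])).
    by apply: eq_bigr => l _; rewrite !mxE conjc_nat.
  by rewrite sum_deltaC (inj_eq perm_inj) eq_sym.
have := P2D (ltn0Sn N) DW uP.
congr D; apply/matrixP => i j; rewrite /rmulmx /lmulmx; rewrite !mxE.
under eq_bigr => l _ do rewrite /adjmx !mxE conjc_nat.
rewrite sum_delta.
under eq_bigr => l _ do rewrite /P mxE.
by rewrite sum_delta.
Qed.

Lemma D_reindex M N (h : 'I_M -> 'I_N) W : bijective h -> D N W ->
  D M (\matrix_(i, j) W (h i) (h j)).
Proof.
move=> bh; have e : M = N by have := bij_eq_card bh; rewrite !card_ord.
subst N; have hinj : injective h := bij_inj bh.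
move=> DW; have := D_perm (perm hinj) DW.
by congr D; apply/matrixP => i j; rewrite !mxE !permE.
Qed.

Definition mk (I : finType) (F : I -> I -> V) : 'M[V]_#|I| :=
  \matrix_(i, j) F (enum_val i) (enum_val j).
Definition DT (I : finType) (F : I -> I -> V) := D #|I| (mk F).

Lemma DT_ext (I : finType) (F G : I -> I -> V) :
  (forall x y, F x y = G x y) -> DT F -> DT G.
Proof.
by move=> e; rewrite /DT; congr D; apply/matrixP => i j; rewrite !mxE e.
Qed.

Lemma DT_reindex (I J : finType) (g : J -> I) F : bijective g -> DT F ->
  DT (fun x y => F (g x) (g y)).
Proof.
case=> g' gK g'K DF.
have bh : bijective (fun i : 'I_#|J| => enum_rank (g (enum_val i))).
  exists (fun i => enum_rank (g' (enum_val i))) => i;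
  by rewrite enum_rankK ?gK ?g'K enum_valK.
have := D_reindex bh DF.
by congr D; apply/matrixP => i j; rewrite !mxE !enum_rankK.
Qed.

Lemma DT_reindex_iff (I J : finType) (g : J -> I) F : bijective g ->
  DT F <-> DT (fun x y => F (g x) (g y)).
Proof.
move=> bg; split; first exact: DT_reindex.
case: bg => g' gK g'K; have bg' : bijective g' by exists g. move/(DT_reindex bg') => H.
by apply: (DT_ext _ H) => x y /=; rewrite !g'K.
Qed.

Lemma D_DT n W : D n W <-> DT (fun i j : 'I_n => W i j).
Proof.
split => H.
  have bh : bijective (fun i : 'I_#|'I_n| => enum_val i).
    by exists enum_rank => i; rewrite ?enum_valK ?enum_rankK.
  by have := D_reindex bh H; congr D; apply/matrixP => i j; rewrite !mxE.
have bh : bijective (fun i : 'I_n => enum_rank i).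
  by exists enum_val => i; rewrite ?enum_valK ?enum_rankK.
by have := D_reindex bh H; congr D; apply/matrixP => i j; rewrite !mxE !enum_rankK.
Qed.

Definition bsum (I J : Type) (A : I -> I -> V) (B : I -> J -> V)
  (Cc : J -> I -> V) (G : J -> J -> V) (x y : I + J) : V :=
  match x, y with
  | inl x, inl y => A x y | inl x, inr y => B x y
  | inr x, inl y => Cc x y | inr x, inr y => G x y end.

Definition smap (I J I' J' : Type) (f : I -> I') (g : J -> J') (x : I + J) : I' + J' :=
  match x with inl a => inl (f a) | inr b => inr (g b) end.

Lemma smap_bij (I J I' J' : Type) (f : I -> I') (g : J -> J') :
  bijective f -> bijective g -> bijective (smap f g).
Proof.
case=> f' fK f'K [g' gK g'K]; exists (smap f' g') => -[a|b] /=;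
by rewrite ?fK ?gK ?f'K ?g'K.
Qed.

Lemma unsplit_bij n m : bijective (@unsplit n m).
Proof. by exists (@split n m); [exact: unsplitK | exact: splitK]. Qed.

Lemma D_block n m (A : 'M[V]_n) (B : 'M[V]_(n, m)) (Cc : 'M[V]_(m, n)) (G : 'M[V]_m) :
  D (n + m) (block_mx A B Cc G) <->
  DT (bsum (fun i j => A i j) (fun i j => B i j) (fun i j => Cc i j) (fun i j => G i j)).
Proof.
rewrite D_DT (DT_reindex_iff _ (unsplit_bij n m)).
by split; apply: DT_ext => -[x|x] [y|y] /=;
  rewrite ?block_mxEul ?block_mxEur ?block_mxEdl ?block_mxEdr.
Qed.

Lemma enum_rank_bij' (I : finType) : bijective (@enum_rank I).
Proof. by exists enum_val => i; rewrite ?enum_valK ?enum_rankK. Qed.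
Lemma enum_val_bij' (I : finType) : bijective (@enum_val I I).
Proof. by exists enum_rank => i; rewrite ?enum_valK ?enum_rankK. Qed.

Lemma DT_sum (I J : finType) (F : I -> I -> V) (G : J -> J -> V) :
  (0 < #|I|)%N -> (0 < #|J|)%N -> DT F -> DT G ->
  DT (bsum F (fun _ _ => 0) (fun _ _ => 0) G).
Proof.
move=> hI hJ dF dG; have := ncD hI hJ dF dG; move/D_block.
move/(DT_reindex (smap_bij (@enum_rank_bij' I) (@enum_rank_bij' J))).
by apply: DT_ext => -[x|x] [y|y] /=; rewrite !mxE ?enum_rankK.
Qed.

Lemma DT_P3 (I J : finType) (F : I -> I -> V) (G : J -> J -> V) :
  (0 < #|I|)%N -> (0 < #|J|)%N ->
  DT (bsum F (fun _ _ => 0) (fun _ _ => 0) G) -> DT F /\ DT G.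
Proof.
move=> hI hJ.
move/(DT_reindex (smap_bij (@enum_val_bij' I) (@enum_val_bij' J))) => H.
have : D (#|I| + #|J|) (block_mx (mk F) 0 0 (mk G)).
  by apply/D_block; apply: DT_ext H => -[x|x] [y|y] /=; rewrite !mxE.
by move/P3D => /(_ hI hJ).
Qed.

Lemma DT_unitary (I : finType) (U : I -> I -> R[i]) F : (0 < #|I|)%N ->
  (forall x y, \sum_l U x l * (U y l)^* = (x == y)%:R) ->
  DT F -> DT (fun x y => \sum_l (U y l)^* *: \sum_l' U x l' *: F l' l).
Proof.
move=> hI uU dF.
pose mU : 'M[R[i]]_#|I| := \matrix_(i, j) U (enum_val i) (enum_val j).
have umU : unitary mU.
  rewrite /unitary; apply/matrixP => i j; rewrite !mxE.
  under eq_bigr => l _ do rewrite !mxE.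
  rewrite -(big_enum_val (fun l => U (enum_val i) l * (U (enum_val j) l)^*)%R) /=.
  by rewrite uU (inj_eq enum_val_inj).
have := P2D hI dF umU.
congr D; apply/matrixP => i j; rewrite /rmulmx /lmulmx !mxE.
under eq_bigr => l _ do rewrite !mxE.
under eq_bigr => l _ do under eq_bigr => l' _ do rewrite !mxE.
rewrite -(big_enum_val (fun l => (U (enum_val j) l)^* *: \sum_(l' < #|I|) U (enum_val i) (enum_val l') *: F (enum_val l') l)) /=.
apply: eq_bigr => l _; congr (_ *: _).
by rewrite -(big_enum_val (fun l' => U (enum_val i) l' *: F l' l)).
Qed.


Lemma DT_bdiag (J : finType) p (H : 'I_p -> J -> J -> V) : (0 < p)%N -> (0 < #|J|)%N ->
  (forall i, DT (H i)) ->
  DT (fun x y : 'I_p * J => if x.1 == y.1 then H x.1 x.2 y.2 else 0).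
Proof.
move=> + hJ; elim: p H => [//|[|p] IH] H _ dH.
  have bg : bijective (fun y : J => ((ord0 : 'I_1), y)).
    by exists snd => // -[i y] /=; rewrite (ord1 i).
  apply/(DT_reindex_iff _ bg); apply: DT_ext (dH ord0) => x y /=.
  by rewrite ?eqxx.
pose g (z : J + ('I_p.+1 * J)) : 'I_p.+2 * J :=
  match z with inl y => (ord0, y) | inr (i, y) => (lift ord0 i, y) end.
have bg : bijective g.
  exists (fun x : 'I_p.+2 * J => match unlift ord0 x.1 with
            Some i => inr (i, x.2) | None => inl x.2 end).
    by case=> [y|[i y]] /=; rewrite ?unlift_none ?liftK.
  by case=> i y /=; case: unliftP => [j ->|->] /=.
apply/(DT_reindex_iff _ bg).
have IH' := IH (fun i => H (lift ord0 i)) isT (fun i => dH _).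
have hP : (0 < #|{: 'I_p.+1 * J}|)%N by rewrite card_prod card_ord muln_gt0.
apply: DT_ext (DT_sum _ hP (dH ord0) IH') => //.
case=> [x|[i x]] [y|[j y]] //=; rewrite ?eqxx // ?(inj_eq (@lift_inj _ ord0)).
Qed.

Lemma delta0P n m (a : 'M[V]_n) (c : 'M[V]_m) b :
  delta D a c b = 0%E <->
  (forall s : R, 0 <= s -> D (n + m)%N (block_mx a (Defs.scalemx (s%:C : R[i]) b) 0 c)).
Proof.
split; last first.
  move=> H; rewrite /delta ereal_supy; last first.
    by split => // s s0 _; exact: H.
  rewrite maxey /einv. have -> : (+oo%E == 0 :> \bar R) = false by []. by rewrite eqxx.
move=> h s s0; have [//|nD] := pselect (D (n + m)%N (block_mx a (Defs.scalemx (s%:C : R[i]) b) 0 c)).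
exfalso; move: h; rewrite /delta.
set S := (X in ereal_sup X).
have supS : (ereal_sup S <= s%:E)%E.
  apply: ge_ereal_sup => t [t0 Ht]; rewrite leNgt; apply/negP => st.
  by apply: nD; apply: Ht => //; exact: ltW.
set x := Order.max _ _.
have x0 : (0 <= x)%E by rewrite /x le_max lexx.
have xs : (x <= s%:E)%E by rewrite /x ge_max supS lee_fin s0.
rewrite /einv; case: ifPn => // xn0; case: ifPn => [/eqP xoo|xnoo].
  by move: xs; rewrite xoo.
move=> /eqP; rewrite eqe invr_eq0 => /eqP fx0; move: xn0.
have : x = (fine x)%:E by rewrite fineK // ge0_fin_numE // (le_lt_trans xs) ?ltry.
by move=> ->; rewrite fx0 eqxx.
Qed.

Section Gsec.
Variables (n m : nat) (a : 'M[V]_n) (c : 'M[V]_m) (b : 'M[V]_(n, m)).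

Definition Gf p (M : 'M[R[i]]_p) (x y : 'I_p * ('I_n + 'I_m)) : V :=
  match x.2, y.2 with
  | inl u, inl v => ((x.1 == y.1)%:R : R[i]) *: a u v
  | inl u, inr v => M x.1 y.1 *: b u v
  | inr u, inl v => 0
  | inr u, inr v => ((x.1 == y.1)%:R : R[i]) *: c u v end.

Definition Wf p (U U' : 'M[R[i]]_p) (x y : 'I_p * ('I_n + 'I_m)) : R[i] :=
  match x.2, y.2 with
  | inl u, inl v => U x.1 y.1 * (u == v)%:R
  | inr u, inr v => U' x.1 y.1 * (u == v)%:R
  | _, _ => 0 end.

Lemma sum_pair p (G : 'I_p * ('I_n + 'I_m) -> V) :
  \sum_l G l = \sum_i (\sum_u G (i, inl u) + \sum_u G (i, inr u)).
Proof.
transitivity (\sum_(l : 'I_p * _) (fun i w => G (i, w)) l.1 l.2).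
  by apply: eq_bigr => -[i w].
by rewrite -(pair_bigA _ (fun i w => G (i, w))) /=; apply: eq_bigr => i _; rewrite big_sumType.
Qed.

Lemma sum_pairC p (G : 'I_p * ('I_n + 'I_m) -> R[i]) :
  \sum_l G l = \sum_i (\sum_u G (i, inl u) + \sum_u G (i, inr u)).
Proof.
transitivity (\sum_(l : 'I_p * _) (fun i w => G (i, w)) l.1 l.2).
  by apply: eq_bigr => -[i w].
by rewrite -(pair_bigA _ (fun i w => G (i, w))) /=; apply: eq_bigr => i _; rewrite big_sumType.
Qed.

Lemma sumW p (U U' : 'M[R[i]]_p) x (G : 'I_p * ('I_n + 'I_m) -> V) :
  \sum_l Wf U U' x l *: G l = match x.2 with
     | inl u => \sum_i U x.1 i *: G (i, inl u)
     | inr u => \sum_i U' x.1 i *: G (i, inr u) end.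
Proof.
rewrite sum_pair; case: x => i0 [u|u] /=; apply: eq_bigr => i _ /=.
  rewrite [X in _ + X]big1 ?addr0 => [|v _]; last by rewrite scale0r.
  under eq_bigr => v _ do rewrite /Wf /= mulrC -scalerA.
  by rewrite sum_delta.
rewrite [X in X + _]big1 ?add0r => [|v _]; last by rewrite scale0r.
under eq_bigr => v _ do rewrite /Wf /= mulrC -scalerA.
by rewrite sum_delta.
Qed.

Lemma sumWc p (U U' : 'M[R[i]]_p) x (G : 'I_p * ('I_n + 'I_m) -> V) :
  \sum_l (Wf U U' x l)^* *: G l = match x.2 with
     | inl u => \sum_i (U x.1 i)^* *: G (i, inl u)
     | inr u => \sum_i (U' x.1 i)^* *: G (i, inr u) end.
Proof.
rewrite sum_pair; case: x => i0 [u|u] /=; apply: eq_bigr => i _ /=.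
  rewrite [X in _ + X]big1 ?addr0 => [|v _]; last by rewrite /Wf /= rmorph0 scale0r.
  under eq_bigr => v _ do rewrite /Wf /= rmorphM rmorph_nat mulrC -scalerA.
  by rewrite sum_delta.
rewrite [X in X + _]big1 ?add0r => [|v _]; last by rewrite /Wf /= rmorph0 scale0r.
under eq_bigr => v _ do rewrite /Wf /= rmorphM rmorph_nat mulrC -scalerA.
by rewrite sum_delta.
Qed.

Lemma sumWC p (U U' : 'M[R[i]]_p) x (G : 'I_p * ('I_n + 'I_m) -> R[i]) :
  \sum_l Wf U U' x l * G l = match x.2 with
     | inl u => \sum_i U x.1 i * G (i, inl u)
     | inr u => \sum_i U' x.1 i * G (i, inr u) end.
Proof.
rewrite sum_pairC; case: x => i0 [u|u] /=; apply: eq_bigr => i _ /=.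
  rewrite [X in _ + X]big1 ?addr0 => [|v _]; last by rewrite /Wf /= mul0r.
  under eq_bigr => v _ do rewrite /Wf /= mulrAC mulrC.
  by rewrite sum_deltaC.
rewrite [X in X + _]big1 ?add0r => [|v _]; last by rewrite /Wf /= mul0r.
under eq_bigr => v _ do rewrite /Wf /= mulrAC mulrC.
by rewrite sum_deltaC.
Qed.

Lemma Wf_unitary p (U U' : 'M[R[i]]_p) :
  (forall i j, \sum_l U i l * (U j l)^* = (i == j)%:R) ->
  (forall i j, \sum_l U' i l * (U' j l)^* = (i == j)%:R) ->
  forall x y, \sum_l Wf U U' x l * (Wf U U' y l)^* = (x == y)%:R.
Proof.
move=> hU hU' [i0 w0] [j0 w1]; rewrite sumWC xpair_eqE.
case: w0 => [u|u]; case: w1 => [v|v] /=.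
- under eq_bigr => i _ do rewrite /Wf /= rmorphM rmorph_nat mulrA.
  by rewrite -mulr_suml hU -natrM mulnb eq_inlE (eq_sym v u).
- under eq_bigr => i _ do rewrite /Wf /= rmorph0 mulr0.
  by rewrite big1 // ?eq_inlrE ?eq_inrlE andbF.
- under eq_bigr => i _ do rewrite /Wf /= rmorph0 mulr0.
  by rewrite big1 // ?eq_inlrE ?eq_inrlE andbF.
- under eq_bigr => i _ do rewrite /Wf /= rmorphM rmorph_nat mulrA.
  by rewrite -mulr_suml hU' -natrM mulnb eq_inrE (eq_sym v u).
Qed.


Lemma sum2_scale p (al be : 'I_p -> R[i]) (G : 'I_p -> 'I_p -> V)
  (ga : 'I_p -> 'I_p -> R[i]) (w : V) : (forall i j, G i j = ga i j *: w) ->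
  \sum_j al j *: \sum_i be i *: G i j = (\sum_j al j * \sum_i be i * ga i j) *: w.
Proof.
move=> hG; rewrite scaler_suml; apply: eq_bigr => j _.
rewrite -scalerA scaler_suml; congr (_ *: _); apply: eq_bigr => i _.
by rewrite hG scalerA.
Qed.

Lemma Gf_conj p (M U U' : 'M[R[i]]_p) : (0 < p)%N -> (0 < n + m)%N ->
  (forall i j, \sum_l U i l * (U j l)^* = (i == j)%:R) ->
  (forall i j, \sum_l U' i l * (U' j l)^* = (i == j)%:R) ->
  DT (Gf M) -> DT (Gf (\matrix_(i, j) \sum_j' (\sum_i' U i i' * M i' j') * (U' j j')^*)).
Proof.
move=> hp hnm hU hU' dG.
have hI : (0 < #|{: 'I_p * ('I_n + 'I_m)}|)%N.
  by rewrite card_prod card_sum !card_ord muln_gt0 hp.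
have := DT_unitary hI (Wf_unitary hU hU') dG.
apply: DT_ext => -[i [u|u]] [j [v|v]].
- under eq_bigr => l _ do rewrite sumW /=.
  rewrite sumWc /= (@sum2_scale p _ _ _ (fun i' j' => (i' == j')%:R) (a u v)) //.
  rewrite /Gf /=; congr (_ *: _); rewrite -hU.
  apply: eq_bigr => j' _; rewrite mulrC; congr (_ * _).
  under eq_bigr => i' _ do rewrite mulrC eq_sym.
  by rewrite sum_deltaC.
- under eq_bigr => l _ do rewrite sumW /=.
  rewrite sumWc /= (@sum2_scale p _ _ _ (fun i' j' => M i' j') (b u v)) //.
  rewrite /Gf /= mxE; congr (_ *: _).
  by apply: eq_bigr => j' _; rewrite mulrC.
- under eq_bigr => l _ do rewrite sumW /=.
  rewrite sumWc /= big1 // => j' _; rewrite big1 ?scaler0 // => i' _.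
  by rewrite /Gf /= scaler0.
- under eq_bigr => l _ do rewrite sumW /=.
  rewrite sumWc /= (@sum2_scale p _ _ _ (fun i' j' => (i' == j')%:R) (c u v)) //.
  rewrite /Gf /=; congr (_ *: _); rewrite -hU'.
  apply: eq_bigr => j' _; rewrite mulrC; congr (_ * _).
  under eq_bigr => i' _ do rewrite mulrC eq_sym.
  by rewrite sum_deltaC.
Qed.

Hypothesis hD : forall s : R, 0 <= s ->
  D (n + m)%N (block_mx a (Defs.scalemx (s%:C : R[i]) b) 0 c).
Hypothesis hn : (0 < n)%N.

Lemma hnm : (0 < n + m)%N.
Proof. by rewrite addn_gt0 hn. Qed.

Lemma Gf_real (s : R) : 0 <= s -> DT (Gf (\matrix_(i, j) (s%:C : R[i]) : 'M_1)).
Proof.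
move=> s0; have := hD s0; move/D_block.
have bg : bijective (fun x : 'I_1 * ('I_n + 'I_m) => x.2).
  by exists (fun y => (ord0, y)) => // -[i y] /=; rewrite (ord1 i).
move/(DT_reindex bg); apply: DT_ext => -[i [u|u]] [j [v|v]];
by rewrite /Gf /= ?mxE ?(ord1 i) ?(ord1 j) ?eqxx ?scale1r.
Qed.

Lemma Gf_cplx (la : R[i]) : DT (Gf (\matrix_(i, j) la : 'M_1)).
Proof.
have [r [r0 nla]] : exists r : R, 0 <= r /\ `|la| = r%:C.
  have /complex_realP [r hr] := normr_real la.
  by exists r; split => //; rewrite -lecR -hr; exact: normr_ge0.
pose phi := if la == 0 then 1 else la / `|la|.
have hphi : phi * phi^* = 1.
  rewrite /phi; case: eqP => [_|/eqP la0]; first by rewrite rmorph1 mulr1.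
  rewrite rmorphM /= mulrACA -normCK.
  have cr : Num.conj (r%:C : R[i]) = r%:C := conjc_real r.
  rewrite fmorphV /= nla cr -invfM -expr2 divff // expf_neq0 // -nla normr_eq0 //.
have hla : la = phi * r%:C.
  rewrite /phi -nla; case: eqP => [->|/eqP la0]; first by rewrite normr0 mulr0.
  by rewrite mulfVK // normr_eq0.
have := Gf_conj (M := \matrix_(i, j) (r%:C : R[i]) : 'M_1)
  (U := \matrix_(i, j) phi) (U' := 1%:M) isT hnm _ _ (Gf_real r0).
have -> : (\matrix_(i, j) \sum_j' (\sum_i' (\matrix_(i, j) phi : 'M_1) i i' *
     (\matrix_(i, j) (r%:C : R[i]) : 'M_1) i' j') * ((1%:M : 'M_1) j j')^* : 'M_1)
   = \matrix_(i, j) la.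
  apply/matrixP => i j; rewrite !mxE !big_ord1 !mxE (ord1 j) eqxx rmorph_nat /= mulr1n mulr1 hla.
  by [].
apply.
  by move=> i j; rewrite big_ord1 !mxE (ord1 i) (ord1 j) eqxx.
by move=> i j; rewrite big_ord1 !mxE (ord1 i) (ord1 j) eqxx /= rmorph_nat /= mulr1n mulr1.
Qed.

Lemma hS : (0 < #|{: 'I_n + 'I_m}|)%N.
Proof. by rewrite card_sum !card_ord hnm. Qed.

Lemma Gf_diag p (d : 'rV[R[i]]_p) : (0 < p)%N -> DT (Gf (diag_mx d)).
Proof.
move=> hp.
have H i : DT (bsum (fun u v => a u v) (fun u v => d 0 i *: b u v)
                    (fun _ _ => 0) (fun u v => c u v)).
  have bg : bijective (fun w : 'I_n + 'I_m => ((ord0 : 'I_1), w)).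
    by exists snd => // -[k w] /=; rewrite (ord1 k).
  have := DT_reindex bg (Gf_cplx (d 0 i)).
  by apply: DT_ext => -[u|u] [v|v]; rewrite /Gf /= ?mxE ?scale1r.
have := DT_bdiag hp hS H.
apply: DT_ext => -[i [u|u]] [j [v|v]]; rewrite /Gf /bsum /= ?mxE;
by case: (eqVneq i j) => [eij|ne]; [subst j|]; rewrite ?eqxx ?(negbTE ne) /= ?mulr1n ?mulr0n ?scale1r ?scale0r.
Qed.

Lemma eq_lsh p q (i j : 'I_p) : (lshift q i == lshift q j) = (i == j).
Proof. exact: (inj_eq (@lshift_inj _ _)). Qed.
Lemma eq_rsh p q (i j : 'I_q) : (rshift p i == rshift p j) = (i == j).
Proof. exact: (inj_eq (@rshift_inj _ _)). Qed.
Lemma eq_lrsh p q (i : 'I_p) (j : 'I_q) : (lshift q i == rshift p j) = false.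
Proof. by rewrite -val_eqE /= ltn_eqF // (leq_trans (ltn_ord i)) ?leq_addr. Qed.
Lemma eq_rlsh p q (i : 'I_q) (j : 'I_p) : (rshift p i == lshift q j) = false.
Proof. by rewrite eq_sym eq_lrsh. Qed.

Lemma Gf_dilate p (M : 'M[R[i]]_p) : (0 < p)%N ->
  DT (Gf (block_mx 0 M (\matrix_(i, j) (M j i)^*) 0)) -> DT (Gf M).
Proof.
move=> hp.
pose g (z : ('I_p * ('I_n + 'I_m)) + ('I_p * ('I_n + 'I_m))) : 'I_(p + p) * ('I_n + 'I_m) :=
  match z with
  | inl (i, inl u) => (lshift p i, inl u)
  | inl (i, inr u) => (rshift p i, inr u)
  | inr (i, inl u) => (rshift p i, inl u)
  | inr (i, inr u) => (lshift p i, inr u) end.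
have bg : bijective g.
  exists (fun x : 'I_(p + p) * ('I_n + 'I_m) => match split x.1, x.2 with
   | inl i, inl u => inl (i, inl u)
   | inr i, inr u => inl (i, inr u)
   | inr i, inl u => inr (i, inl u)
   | inl i, inr u => inr (i, inr u) end).
    have sl i : split (lshift p i) = inl i := unsplitK (inl i).
    have sr i : split (rshift p i) = inr i := unsplitK (inr i).
    by case=> [[i [u|u]]|[i [u|u]]] /=; rewrite ?sl ?sr.
  case=> k w /=; have := splitK k; case: (split k) => i <-; case: w => u //=.
move/(DT_reindex bg) => H.
have hP : (0 < #|{: 'I_p * ('I_n + 'I_m)}|)%N by rewrite card_prod card_ord muln_gt0 hp hS.
suff hB : DT (bsum (Gf M) (fun _ _ => 0) (fun _ _ => 0) (Gf (\matrix_(i, j) (M j i)^*))).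
  by have [] := DT_P3 hP hP hB.
apply: DT_ext H => -[[i [u|u]]|[i [u|u]]] [[j [v|v]]|[j [v|v]]];
rewrite /Gf /bsum /= ?block_mxEul ?block_mxEur ?block_mxEdl ?block_mxEdr
  ?eq_lsh ?eq_rsh ?eq_lrsh ?eq_rlsh ?mxE ?scale0r //.
Qed.

Lemma Gf_all p (M : 'M[R[i]]_p) : (0 < p)%N -> DT (Gf M).
Proof.
move=> hp; apply: Gf_dilate => //.
set H := block_mx _ _ _ _.
have hpp : (0 < p + p)%N by rewrite addn_gt0 hp.
have Hh : map_mx Num.conj (H^T) = H.
  rewrite /H tr_block_mx map_block_mx !trmx0 !map_mx0; congr block_mx;
  by apply/matrixP => i j; rewrite !mxE ?conjCK.
have Hn : H \is normalmx by apply/normalmxP; rewrite Hh.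
have /orthomx_spectralP HE := Hn.
have uP := spectral_unitarymx H.
rewrite invmx_unitary // in HE.
set U := map_mx Num.conj ((spectralmx H)^T) in HE.
have uU : U \is unitarymx by rewrite trmxC_unitary.
have hU : forall i j, \sum_l U i l * (U j l)^* = (i == j)%:R.
  move=> i j; have /matrixP/(_ i j) := unitarymxP uU; rewrite !mxE => <-.
  by apply: eq_bigr => l _; rewrite !mxE.
have E : (\matrix_(i, j) \sum_j' (\sum_i' U i i' * diag_mx (spectral_diag H) i' j')
          * (U j j')^*) = H.
  rewrite [RHS]HE; apply/matrixP => i j; rewrite !mxE; apply: eq_bigr => j' _.
  by rewrite !mxE conjCK.
rewrite -E; apply: Gf_conj => //; first exact: hnm.
exact: Gf_diag.
Qed.

End Gsec.

Lemma sum_idx p k (G : 'I_(p * k) -> V) :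
  \sum_l G l = \sum_i \sum_u G (idx (i, u)).
Proof.
rewrite (reindex (@idx p k)) /=; last exact: onW_bij (idx_bij p k).
by rewrite (pair_bigA _ (fun i u => G (idx (i, u)))); apply: eq_bigr => -[].
Qed.

Lemma sum_mulrn_delta (K : finType) (v : K) (al : R[i]) (G : K -> V) :
  \sum_u (al *+ (u == v)) *: G u = al *: G v.
Proof.
rewrite (bigD1 v) //= eqxx mulr1n big1 ?addr0 // => u /negbTE ->.
by rewrite mulr0n scale0r.
Qed.

Lemma KC p k (A B : 'M[R[i]]_p) (F : 'M[V]_(p * k)) i u j v :
  rmulmx (lmulmx (kronI k A) F) (kronI k B) (idx (i, u)) (idx (j, v)) =
  \sum_j' B j' j *: \sum_i' A i i' *: F (idx (i', u)) (idx (j', v)).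
Proof.
rewrite /rmulmx /lmulmx mxE sum_idx; apply: eq_bigr => j' _.
rewrite (bigD1 v) //= big1 ?addr0 => [|v' ne]; last first.
  by rewrite !mxE !flat_idxK /= (negbTE ne) mulr0n scale0r.
rewrite !mxE !flat_idxK /= eqxx mulr1n; congr (_ *: _).
rewrite sum_idx; apply: eq_bigr => i' _.
rewrite (bigD1 u) //= big1 ?addr0 => [|u' ne]; last first.
  by rewrite !mxE !flat_idxK /= eq_sym (negbTE ne) mulr0n scale0r.
by rewrite !mxE !flat_idxK /= eqxx mulr1n.
Qed.

Lemma scalemxE (x : R[i]) p q (W : 'M[V]_(p, q)) i j : Defs.scalemx x W i j = x *: W i j.
Proof. by rewrite /Defs.scalemx mxE. Qed.

Lemma iv_i :
  (forall k : nat, (0 < k)%N ->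
     ~ exists f : forall p : nat, 'M[R[i]]_p -> 'M[V]_(p * k),
         nc_fun_into D f /\ ~ nc_constant f) ->
  (forall (n m : nat) (a : 'M[V]_n) (c : 'M[V]_m) (b : 'M[V]_(n, m)),
       (0 < n)%N -> (0 < m)%N -> D n a -> D m c -> delta D a c b = 0%E -> b = 0).
Proof.
move=> H4 n m a c b hn hm Da Dc /delta0P hD.
have [//|bn0] := pselect (b = 0); exfalso.
have hk : (0 < n + m)%N by rewrite addn_gt0 hn.
apply: (H4 _ hk).
pose A : 'M[V]_(n + m) := block_mx a 0 0 c.
pose B : 'M[V]_(n + m) := block_mx 0 b 0 0.
pose Fz p (Z : 'M[R[i]]_p) (x y : 'I_p * 'I_(n + m)) : V :=
  ((x.1 == y.1)%:R : R[i]) *: A x.2 y.2 + Z x.1 y.1 *: B x.2 y.2.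
exists (fun p Z => \matrix_(r, r') Fz p Z (flat_idx r) (flat_idx r')).
split.
  split.
  - move=> p Z hp; apply/D_DT.
    have bg : bijective (fun x : 'I_p * ('I_n + 'I_m) => idx (x.1, unsplit x.2)).
      exists (fun r => ((flat_idx r).1, split (flat_idx r).2)).
        by case=> i w /=; rewrite flat_idxK unsplitK.
      by move=> r /=; rewrite splitK -surjective_pairing idxK.
    apply/(DT_reindex_iff _ bg).
    apply: DT_ext (Gf_all hD hn Z hp) => -[i [u|u]] [j [v|v]];
    rewrite /Gf /Fz mxE !flat_idxK /= /A /B ?block_mxEul ?block_mxEur ?block_mxEdl
       ?block_mxEdr ?mxE ?scaler0 ?scale0r ?addr0 ?add0r //.
  - clearbody A B; move=> p q X Y hp hq; apply/matrixP => r r'.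
    rewrite -[r]idxK -[r']idxK; case: (flat_idx r) => i u; case: (flat_idx r') => j v.
    rewrite castmxE esymK [in LHS]mxE !flat_idxK /Fz /=.
    have := splitK i; case: (split i) => i0 <-; have := splitK j; case: (split j) => j0 <-;
    rewrite /= ?idx_lshift ?idx_rshift ?block_mxEul ?block_mxEur ?block_mxEdl ?block_mxEdr
      ?mxE ?flat_idxK /= ?eq_lsh ?eq_rsh ?eq_lrsh ?eq_rlsh /= ?mulr0n ?scale0r ?addr0 //.
  - clearbody A B; move=> p T Z hp uT; apply/matrixP => r r'.
    rewrite -[r]idxK -[r']idxK; case: (flat_idx r) => i u; case: (flat_idx r') => j v.
    rewrite KC mxE !flat_idxK /Fz /=.
    under eq_bigr => j' _ do (under eq_bigr => i' _ do rewrite mxE !flat_idxK /= scalerDr;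
      rewrite big_split /= scalerDr).
    rewrite big_split /=.
    rewrite (@sum2_scale _ _ _ _ (fun i' j' => (i' == j')%:R) (A u v)) //.
    rewrite (@sum2_scale _ _ _ _ (fun i' j' => Z i' j') (B u v)) //.
    congr (_ *: _ + _ *: _).
      have := mulVmx uT; move/matrixP/(_ i j); rewrite !mxE => <-.
      apply: eq_bigr => j' _; rewrite mulrC; congr (_ * _).
      under eq_bigr => i' _ do rewrite mulrC eq_sym.
      by rewrite sum_deltaC.
    rewrite !mxE; apply: eq_bigr => j' _; rewrite mulrC; congr (_ * _).
    by rewrite !mxE.
move=> hc; apply: bn0; apply/matrixP => u v.
have := hc 1%N 0 1%:M isT; move/matrixP/(_ (idx (ord0, lshift m u)) (idx (ord0, rshift n v))).
rewrite !mxE !flat_idxK /Fz /= /A /B !block_mxEur !mxE eqxx /= scaler0 scale0r !add0r scale1r.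
by move=> <-.
Qed.

Lemma ii_iii :
  (forall (n : nat) (a : 'M[V]_n) (b : 'M[V]_n),
       (0 < n)%N -> D n a -> delta D a a b = 0%E -> b = 0) ->
  (forall (n : nat) (a c : 'M[V]_n),
       (0 < n)%N -> D n a -> D n c -> tdelta D a c = 0%E -> a = c).
Proof.
move=> H2 n a c hn Da Dc; rewrite /tdelta => /delta0P hs.
have hnn : (0 < n + n)%N by rewrite addn_gt0 hn.
have DA := ncD hn hn Da Dc.
suff : block_mx (0 : 'M[V]_n) (a - c) (0 : 'M[V]_n) (0 : 'M[V]_n) = 0.
  move/matrixP => e; apply/matrixP => i j; have := e (lshift n i) (rshift n j).
  by rewrite block_mxEur !mxE => /eqP; rewrite subr_eq0 => /eqP.
apply: (H2 _ _ _ hnn DA); apply/delta0P => s s0.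
have P := hs s s0.
have Q := ncD hn hn Dc Da.
have S := ncD hnn hnn P Q.
apply/D_block; apply/(DT_reindex_iff _ (smap_bij (unsplit_bij n n) (unsplit_bij n n))).
move/D_block: S; move/(DT_reindex (smap_bij (unsplit_bij n n) (unsplit_bij n n))).
pose g (z : ('I_n + 'I_n) + ('I_n + 'I_n)) : ('I_n + 'I_n) + ('I_n + 'I_n) :=
  match z with
  | inl (inl x) => inl (inl x) | inl (inr x) => inr (inl x)
  | inr (inl x) => inr (inr x) | inr (inr x) => inl (inr x) end.
have bg : bijective g.
  exists (fun z : ('I_n + 'I_n) + ('I_n + 'I_n) => match z with
  | inl (inl x) => inl (inl x) | inr (inl x) => inl (inr x)
  | inr (inr x) => inr (inl x) | inl (inr x) => inr (inr x) end);
  by case=> [[x|x]|[x|x]].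
move/(DT_reindex bg).
apply: DT_ext => -[[x|x]|[x|x]] [[y|y]|[y|y]];
rewrite /bsum /smap /g /= ?block_mxEul ?block_mxEur ?block_mxEdl ?block_mxEdr ?scalemxE;
rewrite ?block_mxEul ?block_mxEur ?block_mxEdl ?block_mxEdr ?mxE ?scaler0 //.
Qed.

Lemma sdl (K : finType) (x : K) (al : R[i]) (F : K -> V) :
  \sum_l (al *+ (x == l)) *: F l = al *: F x.
Proof.
rewrite (bigD1 x) //= eqxx mulr1n big1 ?addr0 // => l.
by rewrite eq_sym => /negbTE ->; rewrite mulr0n scale0r.
Qed.

Lemma sdr (K : finType) (x : K) (al : R[i]) (F : K -> V) :
  \sum_l (al *+ (l == x)) *: F l = al *: F x.
Proof. by under eq_bigr => l _ do rewrite eq_sym; rewrite sdl. Qed.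

Lemma sum_scale0 (K : finType) (G : K -> V) : \sum_l (0 : R[i]) *: G l = 0.
Proof. by rewrite big1 // => l _; rewrite scale0r. Qed.

Lemma sum_scaler0 (K : finType) (G : K -> R[i]) : \sum_l G l *: (0 : V) = 0.
Proof. by rewrite big1 // => l _; rewrite scaler0. Qed.

Lemma idx_lshift' p q k (i : 'I_p) (u : 'I_k) :
  cast_ord (esym (mulnDl p q k)) (lshift (q * k) (idx (i, u))) = idx (lshift q i, u).
Proof. by rewrite -idx_lshift cast_ordK. Qed.

Lemma idx_rshift' p q k (j : 'I_q) (u : 'I_k) :
  cast_ord (esym (mulnDl p q k)) (rshift (p * k) (idx (j, u))) = idx (rshift p j, u).
Proof. by rewrite -idx_rshift cast_ordK. Qed.

Lemma KC_block p k (fZ fW : 'M[V]_(p * k)) (A B : 'M[R[i]]_(p + p)) i u j v :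
  rmulmx (lmulmx (kronI k A) (castmx (esym (mulnDl p p k), esym (mulnDl p p k))
     (block_mx fZ 0 0 fW))) (kronI k B) (idx (i, u)) (idx (j, v)) =
  \sum_j1 B (lshift p j1) j *: \sum_i1 A i (lshift p i1) *: fZ (idx (i1, u)) (idx (j1, v)) +
  \sum_j1 B (rshift p j1) j *: \sum_i1 A i (rshift p i1) *: fW (idx (i1, u)) (idx (j1, v)).
Proof.
rewrite KC big_split_ord /=; congr (_ + _); apply: eq_bigr => j1 _; congr (_ *: _);
rewrite big_split_ord /=.
  rewrite [X in _ + X]big1 ?addr0; last first.
    by move=> i1 _; rewrite castmxE /= esymK idx_rshift idx_lshift block_mxEdl mxE scaler0.
  by apply: eq_bigr => i1 _; rewrite castmxE /= esymK !idx_lshift block_mxEul.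
rewrite [X in X + _]big1 ?add0r; last first.
  by move=> i1 _; rewrite castmxE /= esymK idx_lshift idx_rshift block_mxEur mxE scaler0.
by apply: eq_bigr => i1 _; rewrite castmxE /= esymK !idx_rshift block_mxEdr.
Qed.

Lemma iii_iv :
  (forall (n : nat) (a c : 'M[V]_n),
       (0 < n)%N -> D n a -> D n c -> tdelta D a c = 0%E -> a = c) ->
  (forall k : nat, (0 < k)%N ->
     ~ exists f : forall p : nat, 'M[R[i]]_p -> 'M[V]_(p * k),
         nc_fun_into D f /\ ~ nc_constant f).
Proof.
move=> H3 k hk [f [[f1 f2 f3] nc]]; apply: nc => p Z W hp.
have hpk : (0 < p * k)%N by rewrite muln_gt0 hp.
have hpp : (0 < p + p)%N by rewrite addn_gt0 hp.
apply: H3 => //; [exact: f1 | exact: f1 |].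
apply/delta0P => s s0.
pose T : 'M[R[i]]_(p + p) := block_mx 1%:M (s%:C)%:M 0 1%:M.
pose Ti : 'M[R[i]]_(p + p) := block_mx 1%:M (- s%:C)%:M 0 1%:M.
have TTi : T *m Ti = 1%:M.
  rewrite /T /Ti mulmx_block !mulmx1 !mul1mx !mul0mx !mulmx0 !addr0 !add0r.
  have -> : (- (s%:C : R[i]))%:M + (s%:C)%:M = 0 :> 'M_p.
    by apply/matrixP => i j; rewrite !mxE -mulrnDl addNr mul0rn.
  by rewrite -scalar_mx_block.
have uT : T \in unitmx by case: (mulmx1_unit TTi).
have iT : invmx T = Ti by rewrite -[invmx T]mulmx1 -TTi mulmxA mulVmx // mul1mx.
have := f1 _ (invmx T *m block_mx Z 0 0 W *m T) hpp.
rewrite f3 // f2 // iT => DY.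
have bh : bijective (cast_ord (esym (mulnDl p p k))).
  by exists (cast_ord (mulnDl p p k)) => x; rewrite ?cast_ordK ?cast_ordKV.
have := D_reindex bh DY.
congr D; apply/matrixP => r r'.
have := splitK r; case: (split r) => r0 <-; have := splitK r'; case: (split r') => r1 <-;
rewrite -[r0]idxK -[r1]idxK; case: (flat_idx r0) => i u; case: (flat_idx r1) => j v;
rewrite [LHS]mxE /= ?idx_lshift' ?idx_rshift' KC_block /T /Ti.
- under [X in X + _]eq_bigr => j1 _ do (rewrite block_mxEul mxE;
    under eq_bigr => i1 _ do rewrite block_mxEul mxE).
  under [X in _ + X]eq_bigr => j1 _ do rewrite block_mxEdl mxE.
  rewrite sum_scale0 addr0 block_mxEul.
  under eq_bigr => j1 _ do rewrite sdl.
  by rewrite sdr !scale1r.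
- under [X in X + _]eq_bigr => j1 _ do (rewrite block_mxEur mxE;
    under eq_bigr => i1 _ do rewrite block_mxEul mxE).
  under [X in _ + X]eq_bigr => j1 _ do (rewrite block_mxEdr mxE;
    under eq_bigr => i1 _ do rewrite block_mxEur mxE).
  under [X in X + _]eq_bigr => j1 _ do rewrite sdl.
  under [X in _ + X]eq_bigr => j1 _ do rewrite sdl.
  rewrite !sdr block_mxEur scalemxE mxE !scale1r mxE scalerDr scaleNr scalerN.
  done.
- under [X in X + _]eq_bigr => j1 _ do (rewrite block_mxEul mxE;
    under eq_bigr => i1 _ do rewrite block_mxEdl mxE; rewrite sum_scale0 scaler0).
  under [X in _ + X]eq_bigr => j1 _ do rewrite block_mxEdl mxE.
  by rewrite sum_scale0 big1 ?addr0 // block_mxEdl mxE.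
- under [X in X + _]eq_bigr => j1 _ do (rewrite block_mxEur mxE;
    under eq_bigr => i1 _ do rewrite block_mxEdl mxE; rewrite sum_scale0 scaler0).
  under [X in _ + X]eq_bigr => j1 _ do (rewrite block_mxEdr mxE;
    under eq_bigr => i1 _ do rewrite block_mxEdr mxE).
  rewrite big1 ?add0r // block_mxEdr.
  under eq_bigr => j1 _ do rewrite sdl.
  by rewrite sdr !scale1r.
Qed.

End Frame.

Unset Implicit Arguments.
Local Close Scope complex_scope.

Theorem theorem3p5 (R : realType) (V : topologicalLmodType R[i])
  (D : forall n : nat, set 'M[V]_n) :
  nc_set D -> P2 D -> P3 D ->
  [<->
    (* (i) *)
    (forall (n m : nat) (a : 'M[V]_n) (c : 'M[V]_m) (b : 'M[V]_(n, m)),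
       (0 < n)%N -> (0 < m)%N -> D n a -> D m c -> delta D a c b = 0%E -> b = 0);
    (* (ii) *)
    (forall (n : nat) (a : 'M[V]_n) (b : 'M[V]_n),
       (0 < n)%N -> D n a -> delta D a a b = 0%E -> b = 0);
    (* (iii) *)
    (forall (n : nat) (a c : 'M[V]_n),
       (0 < n)%N -> D n a -> D n c -> tdelta D a c = 0%E -> a = c);
    (* (iv) *)
    (forall k : nat, (0 < k)%N ->
       ~ exists f : forall p : nat, 'M[R[i]]_p -> 'M[V]_(p * k),
           nc_fun_into D f /\ ~ nc_constant f)].
Proof.
move=> ncD P2D P3D; tfae.
- by move=> H1 n a b hn Da; apply: H1.
- exact: (ii_iii ncD).
- by move=> H3 k hk; apply: (iii_iv P2D H3 hk).
- by move=> H4 n m a c b; apply: (iv_i ncD P2D P3D H4).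
Qed.
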